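(* Let $a$ be a primitive element of $GF(2^m)$, $n\le 2^m-1$, and $1\le k\le d\le n-1$. Let $g(x)=\prod_{j=1}^{n-k}(x-a^j)=\sum_{i=0}^{n-k}g_ix^i$ and $f(x)=\prod_{j=1}^{n-d}(x-a^j)=\sum_{i=0}^{n-d}f_ix^i$. Let $G_k$ be the $k\times n$ matrix whose $r$-th row ($r=1,\dots,k$) is $(0,\dots,0,g_0,g_1,\dots,g_{n-k},0,\dots,0)$ with $r-1$ leading zeros, and let $B$ be the $(d-k)\times n$ matrix whose $r$-th row ($r=1,\dots,d-k$) is $(0,\dots,0,f_0,f_1,\dots,f_{n-d},0,\dots,0)$ with $r-1$ leading zeros. Then the $d\times n$ matrix $G=\begin{bmatrix}G_k\\ B\end{bmatrix}$ has rank $d$; that is, it is a generator matrix of the $[n,d]$ Reed–Solomon code generated by $f(x)$ (the code underlying the minimum-bandwidth regenerating code).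
   Context: The $[n,d]$ Reed–Solomon code generated by $f(x)$ consists of all vectors $(c_0,\dots,c_{n-1})\in GF(2^m)^n$ whose polynomial $\sum_i c_ix^i$ is divisible by $f(x)$. *)

(* Defs.v *)
From HB Require Import structures.
From mathcomp Require Import all_boot all_order all_algebra all_field.
Set Implicit Arguments. Unset Strict Implicit. Unset Printing Implicit Defensive.
Import GRing.Theory.
Local Open Scope ring_scope.

Definition rs_genpoly (F : fieldType) (a : F) (t : nat) : {poly F} :=
  \prod_(1 <= j < t.+1) ('X - (a ^+ j)%:P).

Definition shift_mx (F : fieldType) (p n : nat) (h : {poly F}) : 'M[F]_(p, n) :=
  \matrix_(r < p, j < n) (if (r <= j)%N then h`_(j - r) else 0).

Definition vec_poly (F : fieldType) (n : nat) (c : 'rV[F]_n) : {poly F} :=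
  \sum_(i < n) c 0 i *: 'X^i.

Definition poly_code (F : fieldType) (n : nat) (f : {poly F}) : pred 'rV[F]_n :=
  [pred c | f %| vec_poly c].
Arguments poly_code F n f : clear implicits.
Arguments poly_code {F} n f.

(* Main.v *)
Require Import Defs.
From HB Require Import structures.
From mathcomp Require Import all_boot all_order all_algebra all_field.
From mathcomp Require Import zify.
Import GRing.Theory.
Local Open Scope ring_scope.

Lemma shift_mulE (F : fieldType) (p n : nat) (h : {poly F}) (u : 'rV[F]_p) :
  u *m shift_mx p n h = poly_rV (rVpoly u * h).
Proof.
rewrite {2}(row_sum_delta u) linear_sum /= mulr_suml linear_sum /= mulmx_sum_row.
apply: eq_bigr => i _; rewrite linearZ /= rVpoly_delta -scalerAl linearZ /=.
congr (_ *: _); apply/rowP => j; rewrite !mxE coefXnM leqNgt.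
by case: ltnP.
Qed.

Lemma vec_poly_rV (F : fieldType) (n : nat) (c : 'rV[F]_n) : vec_poly c = rVpoly c.
Proof. by rewrite /vec_poly /rVpoly poly_def; apply: eq_bigr => i _; rewrite valK. Qed.

Lemma size_rVpoly (F : fieldType) (n : nat) (c : 'rV[F]_n) : (size (rVpoly c) <= n)%N.
Proof. exact: size_poly. Qed.
Arguments size_rVpoly {F n} c.

Theorem theorem3 (F : finFieldType) (m : nat) (a : F) (n k d : nat) :
  #|F| = (2 ^ m)%N ->
  (2 ^ m).-1.-primitive_root a ->
  (n <= (2 ^ m).-1)%N ->
  (1 <= k)%N -> (k <= d)%N -> (d <= n.-1)%N ->
  let g := rs_genpoly a (n - k) in
  let f := rs_genpoly a (n - d) in
  let G := col_mx (shift_mx k n g) (shift_mx (d - k) n f) in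
  \rank G = d /\ (forall c : 'rV[F]_n, (c <= G)%MS = (c \in poly_code n f)).
Proof.
move=> _ _ _ k1 kd dn g f G.
pose h := \prod_((n - d).+1 <= j < (n - k).+1) ('X - (a ^+ j)%:P).
have hg : g = f * h.
  by rewrite /g /f /rs_genpoly -big_cat_nat //; lia.
have sf : size f = (n - d).+1.
  by rewrite /f /rs_genpoly size_prod_XsubC /index_iota size_iota; lia.
have sh : size h = (d - k).+1.
  by rewrite /h size_prod_XsubC /index_iota size_iota; lia.
have sg : size g = (n - k).+1.
  by rewrite /g /rs_genpoly size_prod_XsubC /index_iota size_iota; lia.
have f0 : f != 0 by rewrite -size_poly_eq0 sf.
have h0 : h != 0 by rewrite -size_poly_eq0 sh.
have szP : forall (s : 'rV[F]_k) (t : 'rV[F]_(d - k)),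
    (size (rVpoly s * g + rVpoly t * f)%R <= n)%N.
  move=> s t; apply: (leq_trans (size_polyD _ _)); rewrite geq_max.
  have := size_rVpoly s; have := size_rVpoly t.
  have := size_polyMleq (rVpoly s) g; have := size_polyMleq (rVpoly t) f.
  rewrite sf sg => H1 H2 H3 H4; apply/andP; split.
    apply: (leq_trans H2); rewrite addnS /=.
    by apply: (leq_trans (leq_add H4 (leqnn _))); lia.
  apply: (leq_trans H1); rewrite addnS /=.
  by apply: (leq_trans (leq_add H3 (leqnn _))); lia.
have GE : forall (s : 'rV[F]_k) (t : 'rV[F]_(d - k)),
    row_mx s t *m G = poly_rV (rVpoly s * g + rVpoly t * f).
  by move=> s t; rewrite mul_row_col !shift_mulE -linearD.
split.
  have rf : row_free G.
    apply: inj_row_free => v; rewrite -[v]hsubmxK GE => Hv.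
    set s := lsubmx v in Hv *; set t := rsubmx v in Hv *.
    have := poly_rV_K (szP s t); rewrite Hv linear0 => /esym.
    move/eqP; rewrite hg mulrCA (mulrC (rVpoly t)) -mulrDr mulf_eq0 (negbTE f0) /= => /eqP E.
    have S0 : rVpoly s = 0.
      apply/eqP; apply: contraT => sn0.
      have Et : rVpoly t = - (rVpoly s * h) by apply/eqP; rewrite -addr_eq0 addrC E.
      have := size_rVpoly t; rewrite Et size_polyN size_mul // sh.
      move: sn0; rewrite -size_poly_eq0 => sn.
      by rewrite addnS /= -[X in (_ <= X)%N]add0n leq_add2r leqn0 (negbTE sn).
    have T0 : rVpoly t = 0 by move: E; rewrite S0 mul0r add0r.
    have s0 : s = 0 by rewrite -(rVpolyK s) S0 linear0.
    have t0 : t = 0 by rewrite -(rVpolyK t) T0 linear0.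
    by rewrite s0 t0 row_mx0.
  move: rf; rewrite /row_free => /eqP ->; lia.
move=> c; rewrite inE /= vec_poly_rV; apply/idP/idP.
  case/submxP => u ->; rewrite -[u]hsubmxK GE poly_rV_K ?szP // hg.
  by apply: dvdp_add; [rewrite mulrCA dvdp_mulIl | rewrite dvdp_mulIr].
move=> fc; set q := rVpoly c %/ f.
have cq : rVpoly c = q * f by rewrite divpK.
have sq : (size q <= d)%N.
  have [->|q0] := eqVneq q 0; first by rewrite size_poly0.
  have := size_rVpoly c; rewrite cq size_mul // sf addnS /= => H.
  rewrite -(leq_add2r (n - d)); apply: leq_trans H _; lia.
have sdiv : (size (q %/ h)%R <= k)%N 
  by rewrite size_divp // sh /= leq_subLR; apply: leq_trans sq _; lia.
have smod : (size (q %% h)%R <= d - k)%N.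
  by have := ltn_modpN0 q h0; rewrite sh.
have -> : c = row_mx (poly_rV (q %/ h) : 'rV_k) (poly_rV (q %% h) : 'rV_(d - k)) *m G.
  rewrite GE !poly_rV_K // -(rVpolyK c) cq; congr poly_rV.
  by rewrite {1}(divp_eq q h) hg mulrDl -mulrA (mulrC h f).
exact: submxMl.
Qed.
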